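(* Let $\mathcal{X},\mathcal{Y}$ be finite sets and $\mu\ge0$. The map $P_{XY}\mapsto R_\mu(P_{XY})$, defined on the set of probability distributions on $\mathcal{X}\times\mathcal{Y}$, is continuous.
   Context: For a distribution $P_{XY}$ on $\mathcal{X}\times\mathcal{Y}$, $\mathcal{R}^*_{\mathtt{WAK}}(P_{XY})$ is the set of pairs $(r_0,r_2)$ for which there exists a conditional distribution $P_{W|XY}$ with finite $\mathcal{W}$, $|\mathcal{W}|\le|\mathcal{X}||\mathcal{Y}|+2$, such that, for $(W,X,Y)\sim P_{XY}P_{W|XY}$, $r_0\ge I(W\wedge X,Y)$, $r_2\ge H(Y\mid W)$ and $I(W\wedge Y\mid X)=0$ (equivalently, $W$ may be taken to depend on $(X,Y)$ only through $X$, with $r_0\ge I(W\wedge X)$). For $\mu\ge0$, $R_\mu(P_{XY}):=\min\{r_0+\mu r_2:(r_0,r_2)\in\mathcal{R}^*_{\mathtt{WAK}}(P_{XY})\}$. Continuity is with respect to the $\ell_1$ (total variation) distance on distributions. *)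

(* Defs.v *)
From mathcomp Require Import all_boot all_order all_algebra.
From mathcomp Require Import all_classical all_reals all_analysis.
Set Implicit Arguments. Unset Strict Implicit. Unset Printing Implicit Defensive.
Import Order.TTheory GRing.Theory Num.Theory.
Local Open Scope ring_scope.
Local Open Scope classical_set_scope.

Section Info.
Variable R : realType.

Definition xlnx (x : R) : R := if x == 0 then 0 else x * ln x.

Definition ent (T : finType) (p : T -> R) : R := - \sum_(t : T) xlnx (p t).

Definition is_dist (T : finType) (p : {ffun T -> R}) : Prop :=
  (forall t, 0 <= p t) /\ \sum_(t : T) p t = 1.

Definition is_kernel (A B : finType) (V : {ffun A -> {ffun B -> R}}) : Prop :=
  forall a, is_dist (V a).

Variables (X Y : finType).

Section Joint.
Variable (W : finType) (P : {ffun X * Y -> R}) (V : {ffun X * Y -> {ffun W -> R}}).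

Definition jnt (w : W) (x : X) (y : Y) : R := P (x, y) * V (x, y) w.

Definition H_WXY : R := ent (fun t : W * X * Y => jnt t.1.1 t.1.2 t.2).
Definition H_XY  : R := ent (fun t : X * Y => \sum_(w : W) jnt w t.1 t.2).
Definition H_WX  : R := ent (fun t : W * X => \sum_(y : Y) jnt t.1 t.2 y).
Definition H_WY  : R := ent (fun t : W * Y => \sum_(x : X) jnt t.1 x t.2).
Definition H_W   : R := ent (fun w : W => \sum_(x : X) \sum_(y : Y) jnt w x y).
Definition H_X   : R := ent (fun x : X => \sum_(w : W) \sum_(y : Y) jnt w x y).

Definition I_W_XY : R := H_W + H_XY - H_WXY.
Definition H_Y_given_W : R := H_WY - H_W.
Definition I_W_Y_given_X : R := H_WX + H_XY - H_WXY - H_X.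
End Joint.

Definition WAK_region (P : {ffun X * Y -> R}) : set (R * R) :=
  [set r | exists (n : nat) (V : {ffun X * Y -> {ffun 'I_n -> R}}),
      [/\ (n <= #|X| * #|Y| + 2)%N, is_kernel V,
          I_W_Y_given_X P V = 0,
          I_W_XY P V <= r.1 & H_Y_given_W P V <= r.2]].

(* R_mu(P_XY) = min { r0 + mu r2 : (r0,r2) in R*_WAK(P_XY) } (taken as inf) *)
Definition R_mu (mu : R) (P : {ffun X * Y -> R}) : R :=
  inf [set z | exists r, WAK_region P r /\ z = r.1 + mu * r.2].

Definition l1dist (P Q : {ffun X * Y -> R}) : R :=
  \sum_(t : X * Y) `|P t - Q t|.

End Info.

(* Main.v *)
Require Import Defs.
From mathcomp Require Import all_boot all_order all_algebra.
From mathcomp Require Import all_classical all_reals all_analysis.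
From mathcomp Require Import ring lra zify.
Import Order.TTheory GRing.Theory Num.Theory.
Local Open Scope ring_scope.
Set Implicit Arguments. Unset Strict Implicit.

Section XL.
Variable R : realType.

Lemma ln_le_sub1 (t : R) : 0 < t -> ln t <= t - 1.
Proof.
move=> t0; have := @le_ln1Dx R (t - 1).
have -> : 1 + (t - 1) = t by ring.
apply; lra.
Qed.

Lemma ln_lt_sub1 (t : R) : 0 < t -> t != 1 -> ln t < t - 1.
Proof.
move=> t0 t1; rewrite -ltr_expR lnK ?posrE //.
have := @expR_gt1Dx R (t - 1); have -> : 1 + (t - 1) = t by ring.
apply.
by rewrite subr_eq0.
Qed.

Lemma xlnx0 : xlnx (0 : R) = 0.
Proof. by rewrite /xlnx eqxx. Qed.

Lemma xlnx_pos (x : R) : 0 < x -> xlnx x = x * ln x.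
Proof. by move=> x0; rewrite /xlnx gt_eqF. Qed.

Lemma xlnx_le0 (x : R) : 0 <= x -> x <= 1 -> xlnx x <= 0.
Proof.
rewrite le0r => /orP[/eqP->|x0] x1; first by rewrite xlnx0.
by rewrite xlnx_pos // pmulr_rle0 // ln_le0.
Qed.

Lemma xlnx_ge (x : R) : 0 <= x -> -1 <= xlnx x.
Proof.
rewrite le0r => /orP[/eqP->|x0]; first by rewrite xlnx0; lra.
rewrite xlnx_pos //.
have h : ln (x^-1) <= x^-1 - 1 by apply: ln_le_sub1; rewrite invr_gt0.
rewrite lnV ?posrE // in h.
have : x * (- ln x) <= x * (x^-1 - 1) by rewrite ler_pM2l.
rewrite mulrBr mulfV ?gt_eqF // mulr1 mulrN; lra.
Qed.

Lemma xlnx_mul (a b : R) : 0 <= a -> 0 <= b -> xlnx (a * b) = a * xlnx b + b * xlnx a.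
Proof.
rewrite le0r => /orP[/eqP->|a0]; first by rewrite mul0r xlnx0 mul0r mulr0 addr0.
rewrite le0r => /orP[/eqP->|b0]; first by rewrite mulr0 xlnx0 mul0r mulr0 addr0.
rewrite !xlnx_pos ?mulr_gt0 // lnM ?posrE //.
ring.
Qed.

Lemma nlog_bound (d M : R) : 0 < d -> 0 < M -> - (d * ln d) <= M^-1 + d * M.
Proof.
move=> d0 M0.
have h1 : ln ((d * M)^-1) <= (d * M)^-1 - 1.
  by apply: ln_le_sub1; rewrite invr_gt0 mulr_gt0.
rewrite lnV ?posrE ?mulr_gt0 // lnM ?posrE // in h1.
have h2 := @ln_le_sub1 M M0.
have : d * (- ln d) <= d * ((d * M)^-1 + M) by rewrite ler_pM2l //; lra.
rewrite mulrDr invfM mulrA mulfV ?gt_eqF // mul1r mulrN; lra.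
Qed.

Lemma xlnx_mod (a b M : R) : 0 <= a -> a <= b -> b <= 1 -> 0 < M ->
  `|xlnx b - xlnx a| <= (b - a) + (M^-1 + (b - a) * M).
Proof.
move=> a0 ab b1 M0.
have [eab|nab] := eqVneq a b.
  rewrite eab subrr normr0; have := invr_gt0 M; rewrite M0 => hM; nra.
have d0 : 0 < b - a by rewrite subr_gt0 lt_neqAle nab.
have b0 : 0 < b by lra.
have hn := @nlog_bound (b - a) M d0 M0.
have hlnd : ln (b - a) <= ln b by rewrite ler_ln ?posrE //; lra.
have hlnb : ln b <= 0 by exact: ln_le0.
move: a0; rewrite le0r => /orP[/eqP ea|a0].
  rewrite ea xlnx0 subr0 xlnx_pos //; rewrite ea subr0 in hn hlnd d0.
  have hm : b * ln b <= 0 by rewrite pmulr_rle0.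
  rewrite ler0_norm //; lra.
rewrite !xlnx_pos //.
have e1 : b * ln b - a * ln a = (b - a) * ln b + a * (ln b - ln a) by ring.
have hq : ln b - ln a <= b / a - 1.
  by rewrite -ln_div ?posrE //; apply: ln_le_sub1; rewrite divr_gt0.
have hq0 : 0 <= ln b - ln a by rewrite subr_ge0 ler_ln ?posrE.
have u1 : a * (ln b - ln a) <= b - a.
  apply: (@le_trans _ _ (a * (b / a - 1))); first by rewrite ler_pM2l.
  by rewrite mulrBr mulrCA mulfV ?gt_eqF // mulr1 mulr1.
have u2 : 0 <= a * (ln b - ln a) by rewrite mulr_ge0 // ltW.
have u3 : (b - a) * ln b <= 0 by rewrite pmulr_rle0.
have u4 : (b - a) * ln (b - a) <= (b - a) * ln b by rewrite ler_pM2l.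
rewrite e1 ler_norml; apply/andP; split; lra.
Qed.

Lemma xlnx_unif (e : R) : 0 < e -> exists2 dl : R, 0 < dl &
  forall a b, 0 <= a -> a <= 1 -> 0 <= b -> b <= 1 -> `|a - b| < dl ->
    `|xlnx a - xlnx b| < e.
Proof.
move=> e0; pose M := 3 / e.
have M0 : 0 < M by rewrite divr_gt0.
have iM : M^-1 = e / 3 by rewrite /M invf_div.
exists (e / (3 * (1 + M))); first by rewrite divr_gt0 // mulr_gt0 //; lra.
have key : forall a b, 0 <= a -> a <= b -> b <= 1 -> b - a < e / (3 * (1 + M)) ->
    `|xlnx b - xlnx a| < e.
  move=> a b a0 ab b1 hd.
  have := @xlnx_mod a b M a0 ab b1 M0; rewrite iM => h.
  have hd2 : (b - a) * (1 + M) < e / 3.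
    have -> : e / 3 = e / (3 * (1 + M)) * (1 + M).
      by field; rewrite gt_eqF //; lra.
    by rewrite ltr_pM2r //; lra.
  rewrite mulrDr mulr1 in hd2; lra.
move=> a b a0 a1 b0 b1 hab.
have [ab|ba] := leP a b.
  by rewrite distrC; apply: key => //; rewrite distrC ger0_norm ?subr_ge0 in hab.
by apply: key => //; [exact: ltW | rewrite ger0_norm ?subr_ge0 ?ltW in hab].
Qed.

End XL.

Section S2.
Variable R : realType.

Lemma le_sum1 (T : finType) (F : T -> R) i0 : (forall i, 0 <= F i) -> F i0 <= \sum_i F i.
Proof.
move=> F0; rewrite (bigD1 i0) //= lerDl; exact: sumr_ge0.
Qed.

Lemma sum_pair (I J : finType) (F : I -> J -> R) :
  \sum_(p : I * J) F p.1 p.2 = \sum_i \sum_j F i j.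
Proof. by rewrite pair_bigA. Qed.

Lemma sum_triple (W X Y : finType) (F : W -> X -> Y -> R) :
  \sum_(t : W * X * Y) F t.1.1 t.1.2 t.2 = \sum_w \sum_x \sum_y F w x y.
Proof.
rewrite (sum_pair (fun (u : W * X) y => F u.1 u.2 y)) /=.
by rewrite (sum_pair (fun w x => \sum_y F w x y)).
Qed.

Lemma ent_close (T : finType) (p q : T -> R) (e dl : R) :
  (forall a b : R, 0 <= a -> a <= 1 -> 0 <= b -> b <= 1 -> `|a - b| < dl ->
    `|xlnx a - xlnx b| < e) ->
  (forall t, 0 <= p t /\ p t <= 1) -> (forall t, 0 <= q t /\ q t <= 1) ->
  (forall t, `|p t - q t| < dl) ->
  `|ent p - ent q| <= #|T|%:R * e.
Proof.
move=> hu hp hq hd.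
rewrite /ent opprK addrC -sumrB.
apply: (le_trans (ler_norm_sum _ _ _)).
rewrite [X in _ <= X]mulr_natl -sumr_const.
apply: ler_sum => t _; apply: ltW.
have [p0 p1] := hp t; have [q0 q1] := hq t.
by rewrite distrC; apply: hu.
Qed.

Lemma ent_ge0 (T : finType) (p : T -> R) :
  (forall t, 0 <= p t /\ p t <= 1) -> 0 <= ent p.
Proof.
move=> hp; rewrite /ent oppr_ge0; apply: sumr_le0 => t _.
by have [p0 p1] := hp t; exact: xlnx_le0.
Qed.

Lemma ent_le (T : finType) (p : T -> R) :
  (forall t, 0 <= p t) -> ent p <= #|T|%:R.
Proof.
move=> hp; rewrite /ent -sumrN -sumr_const.
apply: ler_sum => t _; have := xlnx_ge (hp t); lra.
Qed.

Section Partial.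
Variables (W X Y : finType) (E : W -> X -> Y -> R).
Hypothesis E0 : forall w x y, 0 <= E w x y.
Let tot := \sum_w \sum_x \sum_y E w x y.

Lemma ps_xy w : \sum_x \sum_y E w x y <= tot.
Proof. apply: (le_sum1 (F := fun w => \sum_x \sum_y E w x y)) => i.
by apply: sumr_ge0 => x _; apply: sumr_ge0. Qed.

Lemma ps_y w x : \sum_y E w x y <= tot.
Proof.
apply: le_trans (ps_xy w).
apply: (le_sum1 (F := fun x => \sum_y E w x y)) => i; exact: sumr_ge0.
Qed.

Lemma ps_1 w x y : E w x y <= tot.
Proof. apply: le_trans (ps_y w x); exact: le_sum1. Qed.

Lemma ps_x w y : \sum_x E w x y <= tot.
Proof.
apply: le_trans (ps_xy w); apply: ler_sum => x _; exact: le_sum1.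
Qed.

Lemma ps_wy x : \sum_w \sum_y E w x y <= tot.
Proof.
apply: ler_sum => w _.
apply: (le_sum1 (F := fun x => \sum_y E w x y)) => i; exact: sumr_ge0.
Qed.

Lemma ps_w x y : \sum_w E w x y <= tot.
Proof.
apply: le_trans (ps_wy x); apply: ler_sum => w _; exact: le_sum1.
Qed.

End Partial.

Definition L (t : R) := if t == 0 then 0 else ln t.

Lemma xlnxL t : xlnx t = t * L t.
Proof. by rewrite /xlnx /L; case: eqP => [->|]; rewrite ?mul0r. Qed.

Section Joint.
Variables (X Y W : finType) (P : {ffun X * Y -> R}) (V : {ffun X * Y -> {ffun W -> R}}).
Definition J w x y := jnt P V w x y.
Definition Am x := \sum_w \sum_y J w x y.
Definition Bm w x := \sum_y J w x y.
Definition Cm x y := \sum_w J w x y.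

Lemma lin3 (F G H K : W -> X -> Y -> R) :
  \sum_w \sum_x \sum_y (F w x y + G w x y - H w x y - K w x y) =
  \sum_w \sum_x \sum_y F w x y + \sum_w \sum_x \sum_y G w x y
  - \sum_w \sum_x \sum_y H w x y - \sum_w \sum_x \sum_y K w x y.
Proof.
rewrite -big_split -!sumrB; apply: eq_bigr => w _ /=.
rewrite -big_split -!sumrB; apply: eq_bigr => x _ /=.
by rewrite -big_split -!sumrB.
Qed.

Lemma I_repr : I_W_Y_given_X P V =
  \sum_w \sum_x \sum_y J w x y * (L (J w x y) + L (Am x) - L (Bm w x) - L (Cm x y)).
Proof.
rewrite /I_W_Y_given_X /H_WX /H_XY /H_WXY /H_X /ent.
rewrite (sum_triple (fun w x y => xlnx (jnt P V w x y))).
rewrite (sum_pair (fun w x => xlnx (\sum_y jnt P V w x y))).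
rewrite (sum_pair (fun x y => xlnx (\sum_w jnt P V w x y))).
have e0 : \sum_w \sum_x \sum_y xlnx (jnt P V w x y) =
    \sum_w \sum_x \sum_y J w x y * L (J w x y).
  by do 3 (apply: eq_bigr => ? _); rewrite xlnxL.
have e1 : \sum_x xlnx (\sum_w \sum_y jnt P V w x y) =
    \sum_w \sum_x \sum_y J w x y * L (Am x).
  rewrite [RHS]exchange_big /=; apply: eq_bigr => x _.
  rewrite xlnxL /Am /J mulr_suml; apply: eq_bigr => w _; by rewrite mulr_suml.
have e2 : \sum_w \sum_x xlnx (\sum_y jnt P V w x y) =
    \sum_w \sum_x \sum_y J w x y * L (Bm w x).
  apply: eq_bigr => w _; apply: eq_bigr => x _.
  by rewrite xlnxL /Bm /J mulr_suml.
have e3 : \sum_x \sum_y xlnx (\sum_w jnt P V w x y) =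
    \sum_w \sum_x \sum_y J w x y * L (Cm x y).
  rewrite [RHS]exchange_big /=; apply: eq_bigr => x _.
  rewrite [RHS]exchange_big /=; apply: eq_bigr => y _.
  by rewrite xlnxL /Cm /J mulr_suml.
rewrite e0 e1 e2 e3.
have -> : \sum_w \sum_x \sum_y J w x y * (L (J w x y) + L (Am x) - L (Bm w x) - L (Cm x y))
  = \sum_w \sum_x \sum_y (J w x y * L (J w x y) + J w x y * L (Am x)
       - J w x y * L (Bm w x) - J w x y * L (Cm x y)).
  by do 3 (apply: eq_bigr => ? _); ring.
rewrite lin3; ring.
Qed.

Lemma lin2 (F G H : W -> X -> Y -> R) :
  \sum_w \sum_x \sum_y (F w x y - G w x y + H w x y) =
  \sum_w \sum_x \sum_y F w x y - \sum_w \sum_x \sum_y G w x y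
  + \sum_w \sum_x \sum_y H w x y.
Proof.
rewrite -sumrB -big_split; apply: eq_bigr => w _ /=.
rewrite -sumrB -big_split; apply: eq_bigr => x _ /=.
by rewrite -sumrB -big_split.
Qed.
End Joint.

Lemma psum0 (T : finType) (F : T -> R) :
  (forall i, 0 <= F i) -> \sum_i F i = 0 -> forall i, F i = 0.
Proof. move=> h s i; exact: (psumr_eq0P (P := xpredT)). Qed.

Lemma Lpos x : 0 < x -> L x = ln x.
Proof. by move=> x0; rewrite /L gt_eqF. Qed.

Lemma gibbs_pt (j a b c : R) : 0 <= j -> j <= b -> j <= c -> b <= a ->
  0 <= (b * c / a - j) + j * (L j + L a - L b - L c) /\
  ((b * c / a - j) + j * (L j + L a - L b - L c) = 0 -> j = b * c / a).
Proof.
move=> j0 jb jc ba.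
move: j0; rewrite le0r => /orP[/eqP j0|jp].
  have b0 : 0 <= b by rewrite -j0.
  have c0 : 0 <= c by rewrite -j0.
  have q0 : 0 <= b * c / a by rewrite divr_ge0 ?mulr_ge0 //; apply: le_trans ba.
  rewrite j0 mul0r addr0 subr0; split => // ->; done.
have bp : 0 < b by apply: lt_le_trans jb.
have cp : 0 < c by apply: lt_le_trans jc.
have ap : 0 < a by apply: lt_le_trans ba.
rewrite !Lpos //.
pose t := b * c / (a * j).
have tp : 0 < t by rewrite /t divr_gt0 ?mulr_gt0.
have lt : ln t = ln b + ln c - ln a - ln j.
  rewrite /t ln_div ?posrE ?mulr_gt0 // !lnM ?posrE //; ring.
have jt : j * t = b * c / a by rewrite /t; field; rewrite !gt_eqF.
have E : b * c / a - j + j * (ln j + ln a - ln b - ln c) = j * (t - 1) - j * ln t.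
  by rewrite lt -jt; ring.
rewrite E.
have h1 := ln_le_sub1 tp.
have h2 : j * ln t <= j * (t - 1) by rewrite ler_pM2l.
split; first by rewrite subr_ge0.
move=> /eqP; rewrite subr_eq0 => /eqP h.
have [t1|t1] := eqVneq t 1.
  by rewrite -jt t1 mulr1.
have h3 := ln_lt_sub1 tp t1.
have : j * ln t < j * (t - 1) by rewrite ltr_pM2l.
by rewrite h ltxx.
Qed.

Lemma xonly_pt (p v s : R) : 0 <= p -> 0 <= v -> p <= s ->
  p * v * (L (p * v) + L s - L (s * v) - L p) = 0.
Proof.
move=> p0 v0 ps.
move: p0; rewrite le0r => /orP[/eqP->|pp]; first by rewrite !mul0r.
move: v0; rewrite le0r => /orP[/eqP->|vp]; first by rewrite mulr0 mul0r.
have sp : 0 < s by apply: lt_le_trans ps.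
rewrite !Lpos ?mulr_gt0 // !lnM ?posrE //; ring.
Qed.

Section Markov.
Variables (X Y W : finType) (P : {ffun X * Y -> R}) (V : {ffun X * Y -> {ffun W -> R}}).
Hypotheses (Pd : is_dist P) (Vk : is_kernel V).

Lemma J0 w x y : 0 <= J P V w x y.
Proof. rewrite /J /jnt; apply: mulr_ge0; [exact: Pd.1 | exact: (Vk _).1]. Qed.

Lemma Cm_P x y : Cm P V x y = P (x, y).
Proof. by rewrite /Cm /J /jnt -mulr_sumr (Vk _).2 mulr1. Qed.

Lemma JB w x y : J P V w x y <= Bm P V w x.
Proof. exact: (le_sum1 (F := fun y => J P V w x y)) (fun y => J0 w x y). Qed.

Lemma JC w x y : J P V w x y <= Cm P V x y.
Proof. exact: (le_sum1 (F := fun w => J P V w x y)) (fun w => J0 w x y). Qed.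

Lemma B0 w x : 0 <= Bm P V w x.
Proof. by apply: sumr_ge0 => y _; exact: J0. Qed.

Lemma BA w x : Bm P V w x <= Am P V x.
Proof. exact: (le_sum1 (F := fun w => Bm P V w x)) (fun w => B0 w x). Qed.

Lemma Am_C x : Am P V x = \sum_y Cm P V x y.
Proof. by rewrite /Am /Cm exchange_big. Qed.

Lemma CA x y : Cm P V x y <= Am P V x.
Proof.
rewrite Am_C; apply: (le_sum1 (F := fun y => Cm P V x y)) => i.
by apply: sumr_ge0 => w _; exact: J0.
Qed.

Lemma sumA : \sum_x Am P V x = 1.
Proof.
under eq_bigr do rewrite Am_C.
under eq_bigr do under eq_bigr do rewrite Cm_P.
by rewrite -(sum_pair (fun x y => P (x, y))) -Pd.2; apply: eq_bigr => -[].
Qed.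

Lemma sumJ : \sum_w \sum_x \sum_y J P V w x y = 1.
Proof. by rewrite exchange_big -sumA. Qed.

Lemma sumq : \sum_w \sum_x \sum_y (Bm P V w x * Cm P V x y / Am P V x) = 1.
Proof.
rewrite exchange_big -sumA /=; apply: eq_bigr => x _.
have -> : \sum_w \sum_y Bm P V w x * Cm P V x y / Am P V x =
  \sum_w Bm P V w x * ((\sum_y Cm P V x y) / Am P V x).
  apply: eq_bigr => w _.
  have -> : (\sum_y Cm P V x y) / Am P V x = \sum_y Cm P V x y / Am P V x by rewrite mulr_suml.
  rewrite mulr_sumr; apply: eq_bigr => y _.
  by rewrite mulrA.
rewrite -mulr_suml -Am_C.
have [->|a0] := eqVneq (Am P V x) 0; first by rewrite mul0r mulr0.
by rewrite mulfV // mulr1.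
Qed.

Lemma markov_fact : I_W_Y_given_X P V = 0 ->
  forall w x y, J P V w x y * Am P V x = Bm P V w x * Cm P V x y.
Proof.
move=> hI.
pose T w x y := J P V w x y * (L (J P V w x y) + L (Am P V x) - L (Bm P V w x) - L (Cm P V x y)).
pose q w x y := Bm P V w x * Cm P V x y / Am P V x.
have hg : forall w x y, 0 <= q w x y - J P V w x y + T w x y.
  move=> w x y; have [] := gibbs_pt (J0 w x y) (JB w x y) (JC w x y) (BA w x).
  by move=> h _; exact: h.
have hs : \sum_w \sum_x \sum_y (q w x y - J P V w x y + T w x y) = 0.
  by rewrite lin2 sumq sumJ -I_repr hI subrr addr0.
move=> w x y.
have h1 := psum0 (fun w => sumr_ge0 _ (fun x _ => sumr_ge0 _ (fun y _ => hg w x y))) hs w.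
have h2 := psum0 (fun x => sumr_ge0 _ (fun y _ => hg w x y)) h1 x.
have h3 := psum0 (hg w x) h2 y.
have [_ h4] := gibbs_pt (J0 w x y) (JB w x y) (JC w x y) (BA w x).
have hj := h4 h3.
have [a0|a0] := eqVneq (Am P V x) 0.
  have b0 : Bm P V w x = 0.
    by apply/le_anti; rewrite B0 andbT -a0 BA.
  by rewrite a0 b0 mulr0 mul0r.
by rewrite hj divfK.
Qed.

End Markov.
End S2.

Section C.
Variable R : realType.
Variables (X Y W : finType).

Lemma I_xonly (P : {ffun X * Y -> R}) (v : {ffun X -> {ffun W -> R}}) :
  (forall t, 0 <= P t) -> (forall x w, 0 <= v x w) -> (forall x, \sum_w v x w = 1) ->
  I_W_Y_given_X P [ffun t : X * Y => v t.1] = 0.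
Proof.
move=> P0 v0 v1.
have eJ : J P [ffun t : X * Y => v t.1] = fun w x y => P (x, y) * v x w.
  by apply: funext => w; apply: funext => x; apply: funext => y; rewrite /J /jnt ffunE.
rewrite I_repr /Am /Bm /Cm eJ /=.
apply: big1 => w _; apply: big1 => x _; apply: big1 => y _.
set s := \sum_y0 P (x, y0).
have eA : \sum_w0 \sum_y0 P (x, y0) * v x w0 = s.
  rewrite exchange_big; apply: eq_bigr => y0 _; by rewrite -mulr_sumr v1 mulr1.
have eB : \sum_y0 P (x, y0) * v x w = s * v x w by rewrite mulr_suml.
have eC : \sum_w0 P (x, y) * v x w0 = P (x, y) by rewrite -mulr_sumr v1 mulr1.
rewrite eA eB eC; apply: xonly_pt => //.
exact: (le_sum1 (F := fun y0 => P (x, y0))).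
Qed.


Section Star.
Variables (P : {ffun X * Y -> R}) (V : {ffun X * Y -> {ffun W -> R}}).
Hypotheses (Pd : is_dist P) (Vk : is_kernel V).
Variable y0 : Y.

Definition vstar : {ffun X -> {ffun W -> R}} :=
  [ffun x => [ffun w => if Am P V x == 0 then V (x, y0) w else Bm P V w x / Am P V x]].

Lemma vstar0 x w : 0 <= vstar x w.
Proof.
rewrite !ffunE; case: ifP => _; first exact: (Vk _).1.
by apply: divr_ge0; [exact: B0 | apply: le_trans (BA Pd Vk w x); exact: B0].
Qed.

Lemma vstar1 x : \sum_w vstar x w = 1.
Proof.
under eq_bigr do rewrite !ffunE.
have [a0|a0] := eqVneq (Am P V x) 0.
  exact: (Vk _).2.
rewrite -mulr_suml.
by rewrite -[X in X / _]/(Am P V x) mulfV.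
Qed.

Lemma jnt_vstar : I_W_Y_given_X P V = 0 ->
  jnt P [ffun t : X * Y => vstar t.1] = jnt P V.
Proof.
move=> hI; apply: funext => w; apply: funext => x; apply: funext => y.
rewrite /jnt !ffunE /=.
have hm := markov_fact Pd Vk hI w x y.
rewrite Cm_P // in hm.
have [a0|a0] := eqVneq (Am P V x) 0.
  have p0 : P (x, y) = 0.
    have h := CA Pd Vk x y; rewrite Cm_P // a0 in h.
    by apply/le_anti; rewrite Pd.1 h.
  by rewrite p0 !mul0r.
rewrite mulrA [P (x, y) * _]mulrC -hm /J /jnt mulfK //.
Qed.

End Star.


Lemma norm_sum1 (A : finType) (F G : A -> R) :
  `|\sum_a F a - \sum_a G a| <= \sum_a `|F a - G a|.
Proof. rewrite -sumrB; exact: ler_norm_sum. Qed.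

Lemma norm_sum2 (A B : finType) (F G : A -> B -> R) :
  `|\sum_a \sum_b F a b - \sum_a \sum_b G a b| <= \sum_a \sum_b `|F a b - G a b|.
Proof.
apply: le_trans (norm_sum1 _ _) _; apply: ler_sum => a _; exact: norm_sum1.
Qed.

Section Close.
Variables (P Q : {ffun X * Y -> R}) (V : {ffun X * Y -> {ffun W -> R}}).
Hypotheses (Pd : is_dist P) (Qd : is_dist Q) (Vk : is_kernel V).

Definition D w x y := `|P (x, y) - Q (x, y)| * V (x, y) w.

Lemma D0 w x y : 0 <= D w x y.
Proof. by rewrite /D mulr_ge0 // (Vk _).1. Qed.

Lemma sumD : \sum_w \sum_x \sum_y D w x y = l1dist P Q.
Proof.
have -> : l1dist P Q = \sum_x \sum_y `|P (x, y) - Q (x, y)|.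
  transitivity (\sum_(p : X * Y) `|P (p.1, p.2) - Q (p.1, p.2)|).
    by apply: eq_bigr => -[].
  exact: (sum_pair (fun x y => `|P (x, y) - Q (x, y)|)).
rewrite exchange_big.
apply: eq_bigr => x _; rewrite exchange_big; apply: eq_bigr => y _.
by rewrite /D -mulr_sumr (Vk _).2 mulr1.
Qed.

Lemma dJ w x y : `|J Q V w x y - J P V w x y| <= D w x y.
Proof.
by rewrite /J /jnt /D -mulrBl normrM (ger0_norm ((Vk _).1 _)) distrC.
Qed.

Lemma f_close (mu e dl : R) : 0 <= mu -> 0 < e ->
  (forall a b : R, 0 <= a -> a <= 1 -> 0 <= b -> b <= 1 -> `|a - b| < dl ->
    `|xlnx a - xlnx b| < e) ->
  l1dist P Q < dl ->
  `|(I_W_XY Q V + mu * H_Y_given_W Q V) - (I_W_XY P V + mu * H_Y_given_W P V)|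
    <= (3 + 2 * mu) * (((#|W| + 1) * (#|X| + 1) * (#|Y| + 1))%:R * e).
Proof.
move=> mu0 e0 hu hl.
set Kn := ((#|W| + 1) * (#|X| + 1) * (#|Y| + 1))%:R.
have bnd : forall (T : finType) (p q : T -> R),
    (#|T| <= (#|W| + 1) * (#|X| + 1) * (#|Y| + 1))%N ->
    (forall t, 0 <= p t /\ p t <= 1) -> (forall t, 0 <= q t /\ q t <= 1) ->
    (forall t, `|p t - q t| <= l1dist P Q) -> `|ent p - ent q| <= Kn * e.
  move=> T p q hT hp hq hd.
  apply: le_trans (ent_close hu hp hq (fun t => le_lt_trans (hd t) hl)) _.
  by apply: ler_wpM2r; [exact: ltW | rewrite /Kn ler_nat].
have JQ0 := J0 Qd Vk; have JP0 := J0 Pd Vk.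
have sQ := sumJ Qd Vk; have sP := sumJ Pd Vk.
have hWXY : `|H_WXY Q V - H_WXY P V| <= Kn * e.
  apply: bnd.
  - by rewrite !card_prod; nia.
  - move=> [[w x] y] /=; split; first exact: JQ0.
    by apply: le_trans (ps_1 JQ0 w x y) _; rewrite sQ.
  - move=> [[w x] y] /=; split; first exact: JP0.
    by apply: le_trans (ps_1 JP0 w x y) _; rewrite sP.
  - move=> [[w x] y] /=; apply: le_trans (dJ w x y) _.
    by rewrite -sumD; exact: ps_1 D0 w x y.
have hXY : `|H_XY Q V - H_XY P V| <= Kn * e.
  apply: bnd.
  - by rewrite !card_prod; nia.
  - move=> [x y] /=; split; first by apply: sumr_ge0 => w _; exact: JQ0.
    by apply: le_trans (ps_w JQ0 x y) _; rewrite sQ.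
  - move=> [x y] /=; split; first by apply: sumr_ge0 => w _; exact: JP0.
    by apply: le_trans (ps_w JP0 x y) _; rewrite sP.
  - move=> [x y] /=; apply: le_trans (norm_sum1 _ _) _.
    apply: le_trans (_ : \sum_w D w x y <= _); first by apply: ler_sum => w _; exact: dJ.
    by rewrite -sumD; exact: ps_w D0 x y.
have hWY : `|H_WY Q V - H_WY P V| <= Kn * e.
  apply: bnd.
  - by rewrite !card_prod; nia.
  - move=> [w y] /=; split; first by apply: sumr_ge0 => x _; exact: JQ0.
    by apply: le_trans (ps_x JQ0 w y) _; rewrite sQ.
  - move=> [w y] /=; split; first by apply: sumr_ge0 => x _; exact: JP0.
    by apply: le_trans (ps_x JP0 w y) _; rewrite sP.
  - move=> [w y] /=; apply: le_trans (norm_sum1 _ _) _.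
    apply: le_trans (_ : \sum_x D w x y <= _); first by apply: ler_sum => x _; exact: dJ.
    by rewrite -sumD; exact: ps_x D0 w y.
have hW : `|H_W Q V - H_W P V| <= Kn * e.
  apply: bnd.
  - by nia.
  - move=> w /=; split; first by apply: sumr_ge0 => x _; apply: sumr_ge0 => y _; exact: JQ0.
    by apply: le_trans (ps_xy JQ0 w) _; rewrite sQ.
  - move=> w /=; split; first by apply: sumr_ge0 => x _; apply: sumr_ge0 => y _; exact: JP0.
    by apply: le_trans (ps_xy JP0 w) _; rewrite sP.
  - move=> w /=; apply: le_trans (norm_sum2 _ _) _.
    apply: le_trans (_ : \sum_x \sum_y D w x y <= _).
      by apply: ler_sum => x _; apply: ler_sum => y _; exact: dJ.
    by rewrite -sumD; exact: ps_xy D0 w.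
have E : (I_W_XY Q V + mu * H_Y_given_W Q V) - (I_W_XY P V + mu * H_Y_given_W P V) =
  (H_W Q V - H_W P V) + (H_XY Q V - H_XY P V) - (H_WXY Q V - H_WXY P V)
  + mu * (H_WY Q V - H_WY P V) - mu * (H_W Q V - H_W P V).
  by rewrite /I_W_XY /H_Y_given_W; ring.
rewrite E.
move: hW hXY hWXY hWY; rewrite !ler_norml => /andP[a1 a2] /andP[b1 b2] /andP[c1 c2] /andP[d1 d2].
have m1 : mu * (H_WY Q V - H_WY P V) <= mu * (Kn * e) by rewrite ler_wpM2l.
have m2 : mu * (- (Kn * e)) <= mu * (H_WY Q V - H_WY P V) by rewrite ler_wpM2l.
have m3 : mu * (H_W Q V - H_W P V) <= mu * (Kn * e) by rewrite ler_wpM2l.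
have m4 : mu * (- (Kn * e)) <= mu * (H_W Q V - H_W P V) by rewrite ler_wpM2l.
apply/andP; split; lra.
Qed.

End Close.

End C.

Section D.
Variable R : realType.
Variables (X Y W : finType).
Section Marg.
Variables (P : {ffun X * Y -> R}) (V : {ffun X * Y -> {ffun W -> R}}).
Hypotheses (Pd : is_dist P) (Vk : is_kernel V).

Lemma HW_ge0 : 0 <= H_W P V.
Proof.
have JP0 := J0 Pd Vk; apply: ent_ge0 => w /=; split.
  by apply: sumr_ge0 => x _; apply: sumr_ge0 => y _; exact: JP0.
by apply: le_trans (ps_xy JP0 w) _; rewrite (sumJ Pd Vk).
Qed.

Lemma HXY_ge0 : 0 <= H_XY P V.
Proof.
have JP0 := J0 Pd Vk; apply: ent_ge0 => -[x y] /=; split.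
  by apply: sumr_ge0 => w _; exact: JP0.
by apply: le_trans (ps_w JP0 x y) _; rewrite (sumJ Pd Vk).
Qed.

Lemma HWY_ge0 : 0 <= H_WY P V.
Proof.
have JP0 := J0 Pd Vk; apply: ent_ge0 => -[w y] /=; split.
  by apply: sumr_ge0 => x _; exact: JP0.
by apply: le_trans (ps_x JP0 w y) _; rewrite (sumJ Pd Vk).
Qed.

Lemma HWXY_le : H_WXY P V <= #|{: W * X * Y}|%:R.
Proof. apply: ent_le => -[[w x] y] /=; exact: (J0 Pd Vk). Qed.

Lemma HW_le : H_W P V <= #|W|%:R.
Proof.
apply: ent_le => w /=; apply: sumr_ge0 => x _; apply: sumr_ge0 => y _; exact: (J0 Pd Vk).
Qed.
End Marg.
End D.

Section Main.
Variable R : realType.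
Variables (X Y : finType).

Definition Kmax := ((#|X| * #|Y| + 3) * (#|X| + 1) * (#|Y| + 1))%N.

Definition fval (mu : R) (P : {ffun X * Y -> R}) n (V : {ffun X * Y -> {ffun 'I_n -> R}}) :=
  I_W_XY P V + mu * H_Y_given_W P V.

Lemma f_lb (mu : R) (P : {ffun X * Y -> R}) n (V : {ffun X * Y -> {ffun 'I_n -> R}}) :
  0 <= mu -> is_dist P -> is_kernel V -> (n <= #|X| * #|Y| + 2)%N ->
  - ((1 + mu) * (Kmax%:R)) <= fval mu P V.
Proof.
move=> mu0 Pd Vk hn.
have h1 := HW_ge0 Pd Vk; have h2 := HXY_ge0 Pd Vk; have h3 := HWY_ge0 Pd Vk.
have h4 := HWXY_le Pd Vk; have h5 := HW_le Pd Vk.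
have c1 : (#|{: 'I_n * X * Y}|%:R : R) <= Kmax%:R.
  by rewrite ler_nat !card_prod card_ord /Kmax; nia.
have c2 : (#|'I_n|%:R : R) <= Kmax%:R.
  by rewrite ler_nat card_ord /Kmax; nia.
have m1 : mu * H_W P V <= mu * Kmax%:R.
  by apply: ler_wpM2l => //; apply: le_trans h5 c2.
have m2 : 0 <= mu * H_WY P V by apply: mulr_ge0.
rewrite /fval /I_W_XY /H_Y_given_W mulrBr; lra.
Qed.

Definition Sset (mu : R) (P : {ffun X * Y -> R}) :=
  [set z | exists r, WAK_region P r /\ z = r.1 + mu * r.2]%classic.

Lemma Sset_lb (mu : R) P : 0 <= mu -> is_dist P -> has_lbound (Sset mu P).
Proof.
move=> mu0 Pd; exists (- ((1 + mu) * (Kmax%:R))).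
move=> z [r [[n [V [hn Vk hI h1 h2]]] ez]]; rewrite ez.
apply: le_trans (f_lb mu0 Pd Vk hn) _.
rewrite /fval; have := ler_wpM2l mu0 h2; lra.
Qed.

Lemma Sset_ne (mu : R) P : is_dist P -> (Sset mu P !=set0)%classic.
Proof.
move=> Pd.
pose v : {ffun X -> {ffun 'I_1 -> R}} := [ffun _ => [ffun _ => 1]].
have v0 : forall x w, 0 <= v x w by move=> x w; rewrite !ffunE.
have v1 : forall x, \sum_w v x w = 1.
  by move=> x; rewrite big_ord1 !ffunE.
pose V := [ffun t : X * Y => v t.1].
exists (fval mu P V), (I_W_XY P V, H_Y_given_W P V); split => //.
exists 1%N, V; split => //.
- by rewrite addn2.
- by move=> t; rewrite ffunE; split; [exact: v0 | exact: v1].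
- exact: I_xonly Pd.1 v0 v1.
Qed.

Lemma one_side (mu eps : R) : 0 <= mu -> 0 < eps ->
  exists2 dl : R, 0 < dl & forall P Q : {ffun X * Y -> R}, is_dist P -> is_dist Q ->
    l1dist P Q < dl -> R_mu mu Q <= R_mu mu P + eps.
Proof.
move=> mu0 eps0.
have K0 : (0 : R) < Kmax%:R by rewrite ltr0n /Kmax; nia.
have c0 : (0 : R) < (3 + 2 * mu) * Kmax%:R by rewrite mulr_gt0 //; lra.
pose e := eps / ((3 + 2 * mu) * Kmax%:R).
have e0 : 0 < e by rewrite divr_gt0.
have [dl dl0 hu] := xlnx_unif e0.
exists dl => // P Q Pd Qd hl.
have [[x0 y0] _] : exists t : X * Y, True.
  case: (pickP (fun _ : X * Y => true)) => [t _|h]; first by exists t.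
  by have := Pd.2; rewrite big_pred0 // => /eqP; rewrite eq_sym oner_eq0.
rewrite /R_mu -/(Sset mu Q) -/(Sset mu P).
suff : inf (Sset mu Q) - eps <= inf (Sset mu P) by lra.
apply: lb_le_inf; first exact: Sset_ne.
move=> z [r [[n [V [hn Vk hI h1 h2]]] ->]].
pose V' := [ffun t : X * Y => vstar P V y0 t.1].
have V'k : is_kernel V'.
  move=> t; split; first by move=> w; rewrite ffunE; exact: vstar0.
  by rewrite ffunE; exact: vstar1.
have hQ : I_W_Y_given_X Q V' = 0.
  exact: I_xonly Qd.1 (vstar0 Pd Vk y0) (vstar1 P Vk y0).
have ej := jnt_vstar Pd Vk y0 hI.
have ef : fval mu P V' = fval mu P V.
  by rewrite /fval /I_W_XY /H_Y_given_W /H_W /H_XY /H_WXY /H_WY ej.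
have inQ : Sset mu Q (fval mu Q V').
  exists (I_W_XY Q V', H_Y_given_W Q V'); split => //.
  by exists n, V'; split.
have i1 := ge_inf (Sset_lb mu0 Qd) inQ.
have i2 := f_close Pd Qd V'k mu0 e0 hu hl.
have c1 : (((#|'I_n| + 1) * (#|X| + 1) * (#|Y| + 1))%:R : R) <= Kmax%:R.
  by rewrite ler_nat card_ord /Kmax; nia.
have i3 : (3 + 2 * mu) * (((#|'I_n| + 1) * (#|X| + 1) * (#|Y| + 1))%:R * e) <= eps.
  apply: le_trans (_ : (3 + 2 * mu) * (Kmax%:R * e) <= _).
    apply: ler_wpM2l; first lra.
    by apply: ler_wpM2r => //; exact: ltW.
  by rewrite mulrA /e mulrCA mulfV ?gt_eqF // mulr1.
have i4 : fval mu P V <= r.1 + mu * r.2.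
  by rewrite /fval; have := ler_wpM2l mu0 h2; lra.
move: i2; rewrite ler_norml => /andP[_ i2].
rewrite /fval in i1 ef i4 *; lra.
Qed.

End Main.

Lemma l1distC (R : realType) (X Y : finType) (P Q : {ffun X * Y -> R}) :
  l1dist P Q = l1dist Q P.
Proof. by apply: eq_bigr => t _; rewrite distrC. Qed.

Unset Implicit Arguments.
Theorem lemma4 (R : realType) (X Y : finType) (mu : R) :
  0 <= mu ->
  forall P : {ffun X * Y -> R}, is_dist P ->
  forall eps : R, 0 < eps ->
  exists2 delta : R, 0 < delta &
    forall Q : {ffun X * Y -> R}, is_dist Q ->
      l1dist P Q < delta -> `|R_mu mu Q - R_mu mu P| < eps.
Proof.
move=> mu0 P Pd eps eps0.
have e2 : 0 < eps / 2 by rewrite divr_gt0.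
have [dl dl0 h] := @one_side R X Y mu (eps / 2) mu0 e2.
exists dl => // Q Qd hl.
have a1 := h P Q Pd Qd hl.
have a2 := h Q P Qd Pd (ltac:(by rewrite l1distC)).
have e3 : eps / 2 < eps by rewrite ltr_pdivrMr //; lra.
rewrite ltr_norml; apply/andP; split; lra.
Qed.
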